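(* Let $m$ be even, $\mathcal{M}$ a set of $m$ items, and let $H=(\mathcal{M},E)$ be an $m/2$-uniform hypergraph such that for every $S\subseteq\mathcal{M}$ with $|S|=m/2$ exactly one of $S$ and $\mathcal{M}\setminus S$ belongs to $E$. Then there exists a monotone submodular valuation function $v':2^{\mathcal{M}}\to\mathbb{R}_{\ge 0}$ with $v'(S)\ne v'(\mathcal{M}\setminus S)$ for all $|S|=m/2$ such that $H^{v'}=H$.
   Context: For a valuation $v$ with $v(S)\neq v(\mathcal{M}\setminus S)$ whenever $|S|=m/2$, the hypergraph $H^{v}=(\mathcal{M},E_v)$ has edge set $E_v=\{S\subset\mathcal{M}:|S|=m/2,\ v(S)>v(\mathcal{M}\setminus S)\}$. A set function $v$ is monotone if $S\subseteq T$ implies $v(S)\le v(T)$, and submodular if $v(S\cup\{g\})-v(S)\ge v(T\cup\{g\})-v(T)$ for all $S\subseteq T$ and $g\notin T$. *)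

(* Defs.v *)
From mathcomp Require Import all_boot all_order all_algebra.
Set Implicit Arguments. Unset Strict Implicit. Unset Printing Implicit Defensive.
Import Order.TTheory GRing.Theory Num.Theory.
Local Open Scope ring_scope.

(* Items: a finite type T, so M = [set: T], m = #|T|. *)

Definition monotone_val (T : finType) (R : numDomainType) (v : {set T} -> R) :=
  forall S U : {set T}, S \subset U -> v S <= v U.

Definition submodular_val (T : finType) (R : numDomainType) (v : {set T} -> R) :=
  forall (S U : {set T}) (g : T), S \subset U -> g \notin U ->
    v (g |: U) - v U <= v (g |: S) - v S.

Definition balanced_distinct (T : finType) (R : numDomainType) (v : {set T} -> R) :=
  forall S : {set T}, (#|S| * 2 = #|T|)%N -> v S != v (~: S).

Definition hyper_of (T : finType) (R : numDomainType) (v : {set T} -> R)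
  : {set {set T}} :=
  [set S : {set T} | ((#|S| * 2 == #|T|)%N) && (v (~: S) < v S)].

(* Main.v *)
Require Import Defs.
From mathcomp Require Import all_boot all_order all_algebra.
From mathcomp Require Import zify.
Import Order.TTheory GRing.Theory Num.Theory.
Local Open Scope ring_scope.

Section Ar.
Local Close Scope ring_scope.
Local Open Scope nat_scope.
Lemma cS m n : (n < m)%N -> ((n.+1) * (2 * m - n.+1) + 2 * n + 1 = n * (2 * m - n) + 2 * m)%N.
Proof. move=> h. have e: (2 * m - n)%N = (2 * m - n.+1).+1 by lia. rewrite e. nia. Qed.
Lemma L1 m s u : (s < u)%N -> (u <= m)%N -> (s * (2 * m - s) + 1 <= u * (2 * m - u))%N.
Proof.
move=> h1 h2. have e1: (2 * m - s)%N = ((m - s) + m)%N by lia. have e2: (2 * m - u)%N = ((m - u) + m)%N by lia.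
rewrite e1 e2. have e3: (m - s)%N = ((m - u) + (u - s))%N by lia. rewrite e3.
have e4 : u = (s + (u - s))%N by lia. set a := (m-u)%N; set d := (u - s)%N. rewrite e4.
have : (0 < d)%N by lia. nia. Qed.
End Ar.

Theorem mainTheorem5 (R : realFieldType) (T : finType) (E : {set {set T}}) :
  ~~ odd #|T| ->
  (forall S : {set T}, S \in E -> (#|S| * 2 = #|T|)%N) ->
  (forall S : {set T}, (#|S| * 2 = #|T|)%N ->
     (S \in E) (+) (~: S \in E)) ->
  exists v : {set T} -> R,
    [/\ forall S, 0 <= v S,
        monotone_val v,
        submodular_val v,
        balanced_distinct v
      & hyper_of v = E].
Proof.
move=> _ HE Hx.
set m := #|T|.
pose c (n : nat) := (n * (2 * m - n))%N.
pose w (S : {set T}) := (c #|S| + (S \in E))%N.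
exists (fun S => (w S)%:R); split.
- by move=> S; rewrite ler0n.
- move=> S U sSU; rewrite ler_nat /w /c.
  have := subset_leqif_cards sSU => -[le eqi].
  case: (boolP (S == U)) => [/eqP -> //|neq].
  have lt : (#|S| < #|U|)%N by rewrite ltn_neqAle le andbT eqi.
  have hU : (#|U| <= m)%N by apply: max_card.
  have := @L1 _ _ _ lt hU.
  case: (S \in E); case: (U \in E); simpl; lia.
- move=> S U g sSU gU; rewrite lerBlDr addrAC lerBrDr -!natrD ler_nat /w /c.
  have gS : g \notin S by apply: contra gU; apply: (subsetP sSU).
  rewrite !cardsU1 gU gS /=.
  have hU1 : (#|g |: U| <= m)%N by apply: max_card.
  rewrite cardsU1 gU /= in hU1.
  have := subset_leqif_cards sSU => -[le eqi].
  case: (boolP (S == U)) => [/eqP -> |neq]; first by lia.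
  have lt : (#|S| < #|U|)%N by rewrite ltn_neqAle le andbT eqi.
  have := @cS _ _ (leq_ltn_trans lt hU1); have := @cS _ _ hU1.
  case: (_ \in E); case: (_ \in E); case: (_ \in E); case: (_ \in E); simpl; lia.
- move=> S hS; rewrite eqr_nat /w.
  have hC : #|~: S| = #|S| by have := cardsC S; rewrite -/m; lia.
  rewrite hC; have := Hx S hS.
  by case: (S \in E); case: (~: S \in E); rewrite /= ?eqn_add2l.
- apply/setP => S; rewrite inE ltr_nat /w.
  case: (boolP (S \in E)) => SE.
  + have hS := HE S SE.
    have hC : #|~: S| = #|S| by have := cardsC S; rewrite -/m; lia.
    have := Hx S hS; rewrite SE /= => /negbTE ->.
    by rewrite hC hS eqxx /= addn0 addn1 ltnSn.
  + case: (boolP (#|S| * 2 == m)%N) => //= /eqP hS.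
    have hC : #|~: S| = #|S| by have := cardsC S; rewrite -/m; lia.
    have := Hx S hS; rewrite (negbTE SE) /= => ->.
    by rewrite hC addn0 addn1 ltnNge leqnSn.
Qed.
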